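(* Let $G$ be a group containing commuting elements $A$ and $B$ whose centralisers $C_G(A)$ and $C_G(B)$ are both different from $G$, are both non-soluble, and are not equal to each other. Let $\mathbb{F}$ be an algebraically closed field and suppose there is a faithful representation of $G$ into $GL(3,\mathbb{F})$. Then after conjugating the image in $GL(3,\mathbb{F})$, the images of $A$ and $B$ are $$A=\begin{pmatrix}\lambda&0&0\\0&\lambda&0\\0&0&\mu\end{pmatrix},\qquad B=\begin{pmatrix}x&0&0\\0&y&0\\0&0&x\end{pmatrix}$$ for some non-zero scalars $\lambda,\mu,x,y\in\mathbb{F}$ with $\lambda\neq\mu$ and $x\neq y$. *)

(* Defs.v *)
From HB Require Import structures.
From mathcomp Require Import all_boot all_order all_algebra.
Set Implicit Arguments. Unset Strict Implicit. Unset Printing Implicit Defensive.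
Import GRing.Theory.
Local Open Scope ring_scope.

Record group := Group {
  carrier :> Type;
  gmul : carrier -> carrier -> carrier;
  gone : carrier;
  ginv : carrier -> carrier;
  gmulA : forall x y z, gmul x (gmul y z) = gmul (gmul x y) z;
  gmul1g : forall x, gmul gone x = x;
  gmulg1 : forall x, gmul x gone = x;
  gmulVg : forall x, gmul (ginv x) x = gone;
  gmulgV : forall x, gmul x (ginv x) = gone
}.

Section GroupDefs.
Variable G : group.

Definition is_subgroup (H : G -> Prop) : Prop :=
  H (gone G) /\ (forall x y, H x -> H y -> H (gmul x y)) /\ (forall x, H x -> H (ginv x)).

Definition gen (S : G -> Prop) : G -> Prop :=
  fun z => forall K, is_subgroup K -> (forall s, S s -> K s) -> K z.

Definition gcomm (a b : G) : G := gmul (gmul (ginv a) (ginv b)) (gmul a b).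

Definition derived (H : G -> Prop) : G -> Prop :=
  gen (fun z => exists a b, H a /\ H b /\ z = gcomm a b).

Fixpoint derived_series (n : nat) (H : G -> Prop) : G -> Prop :=
  match n with
  | 0 => H
  | n'.+1 => derived (derived_series n' H)
  end.

Definition soluble (H : G -> Prop) : Prop :=
  exists n, forall z, derived_series n H z -> z = gone G.

Definition centraliser (a : G) : G -> Prop := fun g => gmul g a = gmul a g.

End GroupDefs.

Definition faithful_rep (G : group) (F : fieldType) (n : nat)
  (rho : G -> 'M[F]_n) : Prop :=
  (forall g, rho g \in unitmx) /\
  (forall g h, rho (gmul g h) = rho g *m rho h) /\
  injective rho.

(* Main.v *)
Require Import Defs.
From HB Require Import structures.
From mathcomp Require Import all_boot all_order all_algebra.
Import GRing.Theory.
Local Open Scope ring_scope.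

Set Implicit Arguments. Unset Strict Implicit. Unset Printing Implicit Defensive.


Section Vec.
Variable F : fieldType.
Implicit Types v w u : 'rV[F]_3.

Definition mk3 v0 v1 v2 : 'M[F]_3 :=
  \matrix_(i < 3) (if nat_of_ord i == 0%N then v0 else if nat_of_ord i == 1%N then v1 else v2).

Lemma mk3_0 v0 v1 v2 : row 0 (mk3 v0 v1 v2) = v0. Proof. by rewrite rowK. Qed.
Lemma mk3_1 v0 v1 v2 : row 1 (mk3 v0 v1 v2) = v1. Proof. by rewrite rowK. Qed.
Lemma mk3_2 v0 v1 v2 : row 2 (mk3 v0 v1 v2) = v2. Proof. by rewrite rowK. Qed.

Lemma sum3 (V : nmodType) (f : 'I_3 -> V) : \sum_(i < 3) f i = f 0 + f 1 + f 2.
Proof.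
rewrite !big_ord_recl big_ord0 addr0 addrA.
by congr (_ + _ + _); congr f; apply/val_inj.
Qed.

Lemma mulmx3 (w : 'rV_3) v0 v1 v2 :
  w *m mk3 v0 v1 v2 = w 0 0 *: v0 + w 0 1 *: v1 + w 0 2 *: v2.
Proof. by rewrite mulmx_sum_row sum3 mk3_0 mk3_1 mk3_2. Qed.

Lemma rV3P (w : 'rV[F]_3) : w 0 0 = 0 -> w 0 1 = 0 -> w 0 2 = 0 -> w = 0.
Proof.
move=> h0 h1 h2; apply/rowP => j; rewrite [RHS]mxE.
case: j => [[|[|[|k]]] Hk] //.
- by rewrite -h0; congr (w _ _); apply/val_inj.
- by rewrite -h1; congr (w _ _); apply/val_inj.
- by rewrite -h2; congr (w _ _); apply/val_inj.
Qed.

Lemma mk3_unit v0 v1 v2 :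
  (forall a b c : F, a *: v0 + b *: v1 + c *: v2 = 0 -> [/\ a = 0, b = 0 & c = 0]) ->
  mk3 v0 v1 v2 \in unitmx.
Proof.
move=> H; rewrite -row_free_unit -kermx_eq0; apply/negPn/negP => nz.
set w := nz_row (kermx (mk3 v0 v1 v2)).
have: w *m mk3 v0 v1 v2 = 0 by apply/sub_kermxP; exact: nz_row_sub.
rewrite mulmx3 => /H [h0 h1 h2].
have : w == 0 by apply/eqP/rV3P.
by rewrite nz_row_eq0 (negbTE nz).
Qed.

Lemma mk3_decomp v0 v1 v2 u : mk3 v0 v1 v2 \in unitmx ->
  exists a b c, u = a *: v0 + b *: v1 + c *: v2.
Proof.
move=> U; set w := u *m invmx (mk3 v0 v1 v2).
by exists (w 0 0), (w 0 1), (w 0 2); rewrite -mulmx3 /w mulmxKV.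
Qed.

Lemma conj_diag (Q X : 'M[F]_3) (d : 'rV_3) : Q \in unitmx ->
  (forall i, row i Q *m X = d 0 i *: row i Q) -> Q *m X *m invmx Q = diag_mx d.
Proof.
move=> U H; apply/row_matrixP => i.
by rewrite !row_mul H -scalemxAl -row_mul mulmxV // row1 row_diag_mx.
Qed.

Lemma conj_tri (Q Y : 'M[F]_3) c a b : Q \in unitmx ->
  row 0 Q *m Y = c *: row 0 Q -> row 1 Q *m Y = a *: row 0 Q + b *: row 1 Q ->
  let M := Q *m Y *m invmx Q in [/\ M 0 1 = 0, M 0 2 = 0 & M 1 2 = 0].
Proof.
move=> U h0 h1 M.
have R i : row i Q *m invmx Q = 'e_i by rewrite -row_mul mulmxV // row1.
have E0 : row 0 M = c *: 'e_0 by rewrite /M !row_mul h0 -scalemxAl R.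
have E1 : row 1 M = a *: 'e_0 + b *: 'e_1.
  by rewrite /M !row_mul h1 mulmxDl -!scalemxAl !R.
have Me i j : M i j = row i M 0 j by rewrite [RHS]mxE.
by rewrite !Me E0 E1 !mxE /= !mulr0 ?addr0.
Qed.

End Vec.


Section Mat.
Variable F : fieldType.

Lemma line_mult m (S : 'M[F]_(m,3)) (u : 'rV_3) : \rank S = 1%N -> (u <= S)%MS ->
  exists c, u = c *: nz_row S.
Proof.
move=> rS uS.
have kS := nz_row_sub S.
have knz : nz_row S != 0 by rewrite nz_row_eq0 -mxrank_eq0 rS.
have Sk : (S <= nz_row S)%MS by rewrite -(mxrank_leqif_sup kS).2 rank_rV knz rS.
by apply/sub_rVP; apply: submx_trans uS Sk.
Qed.

Lemma commN (X Y : 'M[F]_3) l : X *m Y = Y *m X -> (X - l%:M) *m Y = Y *m (X - l%:M).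
Proof. by move=> h; rewrite mulmxBl mulmxBr h scalar_mxC. Qed.

Lemma kerY (N Y : 'M[F]_3) (v : 'rV_3) : N *m Y = Y *m N -> v *m N = 0 -> (v *m Y) *m N = 0.
Proof. by move=> h hv; rewrite -mulmxA -h mulmxA hv mul0mx. Qed.

Definition good (X : 'M[F]_3) lam mu :=
  [/\ lam != mu, \rank (X - lam%:M) = 1%N & (X - lam%:M) *m (X - mu%:M) = 0].

Definition flagP (X : 'M[F]_3) := exists v0 v1 v2, mk3 v0 v1 v2 \in unitmx /\
  forall Y, X *m Y = Y *m X -> exists c a b,
     v0 *m Y = c *: v0 /\ v1 *m Y = a *: v0 + b *: v1.

Lemma scale_nz (r : F) (v : 'rV[F]_3) : r *: v = 0 -> v != 0 -> r = 0.
Proof. by move/eqP; rewrite scaler_eq0 => /orP [/eqP //|->]. Qed.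

Lemma indep2 (p q : F) (v0 v1 : 'rV[F]_3) : p *: v0 + q *: v1 = 0 -> v0 != 0 ->
  ~~ (v1 <= v0)%MS -> p = 0 /\ q = 0.
Proof.
move=> h v0nz v1n.
have q0 : q = 0.
  case: (eqVneq q 0) => // qnz; exfalso; move/negP: v1n; apply.
  apply/sub_rVP; exists (- (p / q)).
  have : q *: v1 = - (p *: v0).
    by rewrite -(addrK (p *: v0) (q *: v1)) [q *: v1 + _]addrC h sub0r.
  move=> /(congr1 (fun w => q^-1 *: w)); rewrite scalerA mulVf // scale1r => ->.
  by rewrite scalerN scalerA mulrC scaleNr.
split=> //; move: h; rewrite q0 scale0r addr0 => h; exact: scale_nz h v0nz.
Qed.

Lemma case1 (X : 'M[F]_3) l : \rank (X - l%:M) = 1%N -> (exists mu, good X l mu) \/ flagP X.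
Proof.
set N := X - l%:M => rN.
have Nnz : N != 0 by rewrite -mxrank_eq0 rN.
set a := nz_row N.
have anz : a != 0 by rewrite nz_row_eq0.
have aN : (a <= N)%MS := nz_row_sub N.
have Na : (N <= a)%MS by rewrite -(mxrank_leqif_sup aN).2 rank_rV anz rN.
have [t at_] : exists t, a *m N = t *: a by apply: line_mult rN _; exact: submxMl.
have [D hD] := submxP Na.
have NN : N *m N = t *: N by rewrite {1}hD -mulmxA at_ -scalemxAr -hD.
case: (eqVneq t 0) => [t0 | tnz]; last first.
  left; exists (l + t); split => //.
    by rewrite eq_sym -subr_eq0 addrC addKr.
  have -> : X - (l + t)%:M = N - t%:M by rewrite /N raddfD opprD addrA.
  by rewrite mulmxBr NN mul_mx_scalar subrr.
right.
have aN0 : a *m N = 0 by rewrite at_ t0 scale0r.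
have : ~~ (kermx N <= a)%MS.
  by apply/negP => /mxrankS; rewrite mxrank_ker rN rank_rV anz.
case/row_subPn => i v1a; set v1 := row i (kermx N).
have v1N : v1 *m N = 0 by apply/sub_kermxP; exact: row_sub.
have : ~~ (1%:M <= kermx N)%MS.
  by apply/negP => /mxrankS; rewrite mxrank1 mxrank_ker rN.
case/row_subPn => j v2k; set v2 := row j (1%:M : 'M[F]_3).
have v2N : v2 *m N != 0 by apply/negP => /eqP /sub_kermxP; apply/negP.
have kill : forall p q r : F, (p *: a + q *: v1 + r *: v2) *m N = r *: (v2 *m N).
  by move=> p q r; rewrite !mulmxDl -!scalemxAl aN0 v1N !scaler0 !add0r.
have U : mk3 a v1 v2 \in unitmx.
  apply: mk3_unit => p q r h.
  have r0 : r = 0 by apply: scale_nz v2N; rewrite -(kill p q) h mul0mx.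
  move: h; rewrite r0 scale0r addr0 => h.
  by have [-> ->] := indep2 h anz v1a.
exists a, v1, v2; split => // Y hY.
have NY := commN l hY.
have [c hc] : exists c, a *m Y = c *: a.
  apply: line_mult rN _; have [E hE] := submxP aN.
  by rewrite hE -mulmxA NY mulmxA submxMl.
have [p [q [r hv]]] := mk3_decomp (v1 *m Y) U.
have r0 : r = 0.
  by apply: scale_nz v2N; rewrite -(kill p q) -hv (kerY NY v1N).
by exists c, p, q; rewrite hv r0 scale0r addr0.
Qed.

Lemma case2a (X : 'M[F]_3) l : \rank (X - l%:M) = 2%N ->
  \rank ((X - l%:M) *m (X - l%:M)) != 2%N -> flagP X.
Proof.
set N := X - l%:M => rN rNN.
have rk : \rank (kermx N) = 1%N by rewrite mxrank_ker rN.
set k := nz_row (kermx N).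
have knz : k != 0 by rewrite nz_row_eq0 -mxrank_eq0 rk.
have kN : k *m N = 0 by apply/sub_kermxP; exact: nz_row_sub.
have NNle : (\rank (N *m N) <= 1)%N.
  by move: (mxrankM_maxl N N) rNN; rewrite rN; case: (\rank _) => [|[|[|r]]].
have NNnz : N *m N != 0.
  by apply/negP => /eqP /sub_kermxP /mxrankS; rewrite rN rk.
have : ~~ (kermx (N *m N) <= kermx N)%MS.
  apply/negP => /mxrankS; rewrite rk mxrank_ker.
  by move: NNle; case: (\rank (N *m N)) => [|[|r]].
case/row_subPn => i v1k; set v1 := row i (kermx (N *m N)).
have v1NN : v1 *m (N *m N) = 0 by apply/sub_kermxP; exact: row_sub.
have v1N : v1 *m N != 0 by apply: contra v1k => /eqP /sub_kermxP.
have : ~~ (1%:M <= kermx (N *m N))%MS.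
  by apply: contra NNnz => /sub_kermxP; rewrite mul1mx => ->.
case/row_subPn => j v2k; set v2 := row j (1%:M : 'M[F]_3).
have v2NN : v2 *m (N *m N) != 0 by apply: contra v2k => /eqP /sub_kermxP.
have kNN : k *m (N *m N) = 0 by rewrite mulmxA kN mul0mx.
have kill2 : forall p q r : F, (p *: k + q *: v1 + r *: v2) *m (N *m N) = r *: (v2 *m (N *m N)).
  by move=> p q r; rewrite !(mulmxDl _ _ (N *m N)) -!scalemxAl kNN v1NN !scaler0 !add0r.
have U : mk3 k v1 v2 \in unitmx.
  apply: mk3_unit => p q r h.
  have r0 : r = 0 by apply: scale_nz v2NN; rewrite -(kill2 p q) h mul0mx.
  move: h; rewrite r0 scale0r addr0 => h.
  have q0 : q = 0.
    apply: scale_nz v1N.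
    by have := congr1 (mulmx^~ N) h; rewrite (mulmxDl _ _ N) -!scalemxAl kN scaler0 add0r mul0mx.
  by move: h; rewrite q0 scale0r addr0 => /scale_nz /(_ knz).
exists k, v1, v2; split => // Y hY.
have NY := commN l hY.
have NNY : (N *m N) *m Y = Y *m (N *m N).
  by rewrite -mulmxA NY mulmxA NY mulmxA.
have [c hc] : exists c, k *m Y = c *: k.
  by apply: line_mult rk _; apply/sub_kermxP; apply: kerY NY kN.
have [p [q [r hv]]] := mk3_decomp (v1 *m Y) U.
have r0 : r = 0.
  by apply: scale_nz v2NN; rewrite -(kill2 p q) -hv (kerY NNY v1NN).
by exists c, p, q; rewrite hv r0 scale0r addr0.
Qed.

Lemma case2b (X : 'M[F]_3) l m : l != m -> \rank (X - l%:M) = 2%N ->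
  \rank (X - m%:M) = 2%N -> flagP X.
Proof.
set N := X - l%:M; set M := X - m%:M => lm rN rM.
have rkN : \rank (kermx N) = 1%N by rewrite mxrank_ker rN.
have rkM : \rank (kermx M) = 1%N by rewrite mxrank_ker rM.
set k := nz_row (kermx N); set k' := nz_row (kermx M).
have knz : k != 0 by rewrite nz_row_eq0 -mxrank_eq0 rkN.
have k'nz : k' != 0 by rewrite nz_row_eq0 -mxrank_eq0 rkM.
have kN : k *m N = 0 by apply/sub_kermxP; exact: nz_row_sub.
have k'M : k' *m M = 0 by apply/sub_kermxP; exact: nz_row_sub.
have NMeq : N = M + (m - l)%:M by rewrite /N /M raddfB /= addrA subrK.
have k'N : k' *m N = (m - l) *: k' by rewrite NMeq mulmxDr k'M add0r mul_mx_scalar.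
have XM : X *m M = M *m X by rewrite /M mulmxBl mulmxBr scalar_mxC.
have NM : N *m M = M *m N by apply: commN.
have NMnz : N *m M != 0.
  by apply/negP => /eqP /sub_kermxP /mxrankS; rewrite rN rkM.
have : ~~ (1%:M <= kermx (N *m M))%MS.
  by apply: contra NMnz => /sub_kermxP; rewrite mul1mx => ->.
case/row_subPn => j v2k; set v2 := row j (1%:M : 'M[F]_3).
have v2NM : v2 *m (N *m M) != 0 by apply: contra v2k => /eqP /sub_kermxP.
have ml : m - l != 0 by rewrite subr_eq0 eq_sym.
have U : mk3 k k' v2 \in unitmx.
  apply: mk3_unit => p q r h.
  have r0 : r = 0.
    apply: scale_nz v2NM.
    have := congr1 (mulmx^~ (N *m M)) h; rewrite !(mulmxDl _ _ (N *m M)) -!scalemxAl mul0mx.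
    have kNM : k *m (N *m M) = 0 by rewrite mulmxA kN mul0mx.
    have k'NM : k' *m (N *m M) = 0 by rewrite NM mulmxA k'M mul0mx.
    by rewrite kNM k'NM !scaler0 !add0r.
  move: h; rewrite r0 scale0r addr0 => h.
  have q0 : q = 0.
    apply: scale_nz (_ : (m - l) *: k' != 0); last by rewrite scaler_eq0 negb_or ml.
    have := congr1 (mulmx^~ N) h.
    by rewrite (mulmxDl _ _ N) -!scalemxAl kN k'N scaler0 add0r mul0mx.
  by move: h; rewrite q0 scale0r addr0 => /scale_nz /(_ knz).
exists k, k', v2; split => // Y hY.
have NY := commN l hY.
have MY := commN m hY.
have [c hc] : exists c, k *m Y = c *: k.
  by apply: line_mult rkN _; apply/sub_kermxP; apply: kerY NY kN.
have [c' hc'] : exists c, k' *m Y = c *: k'.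
  by apply: line_mult rkM _; apply/sub_kermxP; apply: kerY MY k'M.
by exists c, 0, c'; rewrite hc hc' scale0r add0r.
Qed.

End Mat.


Section Closed.
Variable F : closedFieldType.

Lemma root_rank (X : 'M[F]_3) l : root (char_poly X) l -> (\rank (X - l%:M)%R < 3)%N.
Proof.
rewrite -eigenvalue_root_char /eigenvalue /eigenspace -mxrank_eq0 mxrank_ker.
by case: (\rank _) => [|[|[|[|r]]]].
Qed.

Lemma eig_exists (X : 'M[F]_3) : exists l, (\rank (X - l%:M)%R < 3)%N.
Proof.
have : size (char_poly X) != 1%N by rewrite size_char_poly.
by case/closed_rootP => l /root_rank; exists l.
Qed.

Lemma other_eig (X : 'M[F]_3) l : \rank (X - l%:M) = 2%N ->
  \rank ((X - l%:M) *m (X - l%:M)) = 2%N -> exists m, m != l /\ (\rank (X - m%:M)%R < 3)%N.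
Proof.
set N := X - l%:M => rN rNN.
have [r hr] := closed_field_poly_normal (char_poly X).
rewrite (monicP (char_poly_monic X)) scale1r in hr.
case: (boolP (all (pred1 l) r)) => [/all_pred1P hr2 | ]; last first.
  rewrite -has_predC => /hasP [m mr ml]; exists m; split => //.
  by apply: root_rank; rewrite hr root_prod_XsubC.
exfalso.
have sz : size r = 3%N.
  by have := size_char_poly X; rewrite hr size_prod_XsubC => -[].
have CH := Cayley_Hamilton X.
rewrite hr hr2 sz big_nseq /= !rmorphM rmorph1 /= rmorphB /= horner_mx_X horner_mx_C in CH.
rewrite -/N mulr1 -!mulmxE in CH.
have h1 : (N *m N <= N)%MS by exact: submxMl.
have h2 : (N <= N *m N)%MS by rewrite -(mxrank_leqif_sup h1).2 rNN rN.
have := mxrankS (submxMr N h2); rewrite -mulmxA CH mxrank0 rNN.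
by [].
Qed.

Lemma classify (X : 'M[F]_3) : (forall a, X != a%:M) ->
  (exists l m, good X l m) \/ flagP X.
Proof.
move=> ns.
have gen : forall l, (\rank (X - l%:M)%R < 3)%N -> \rank (X - l%:M) = 1%N \/ \rank (X - l%:M) = 2%N.
  move=> l; have : \rank (X - l%:M) != 0%N by rewrite mxrank_eq0 subr_eq0 ns.
  by case: (\rank _) => [|[|[|r]]] //; auto.
have [l rl] := eig_exists X.
case: (gen l rl) => r1.
  by case: (case1 r1) => [[m g]|f]; [left; exists l, m | right].
case: (eqVneq (\rank ((X - l%:M) *m (X - l%:M))) 2%N) => rNN; last by right; exact: (case2a r1 rNN).
have [m [ml rm]] := other_eig r1 rNN.
case: (gen m rm) => r2.
  by case: (case1 r2) => [[m' g]|f]; [left; exists m, m' | right].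
by right; apply: (case2b (l:=l) (m:=m)) => //; rewrite eq_sym.
Qed.

End Closed.


Section Grp.
Variable G : group.
Implicit Types x y z : G.

Lemma inv_uniq x y : gmul x y = gone G -> y = ginv x.
Proof.
move=> h; rewrite -[y]gmul1g -(gmulVg x) -gmulA h gmulg1 //.
Qed.

Lemma ginv_mul x y : ginv (gmul x y) = gmul (ginv y) (ginv x).
Proof.
apply/esym/inv_uniq.
by rewrite -gmulA [gmul y _]gmulA gmulgV gmul1g gmulgV.
Qed.

Lemma ginvK x : ginv (ginv x) = x.
Proof. by apply/esym/inv_uniq; rewrite gmulVg. Qed.

Lemma ginv1 : ginv (gone G) = gone G.
Proof. by apply/esym/inv_uniq; rewrite gmul1g. Qed.

Lemma ginv_comm x y : ginv (gcomm x y) = gcomm y x.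
Proof. by rewrite /gcomm ginv_mul !ginv_mul !ginvK. Qed.

Lemma cent_inv (a g : G) : centraliser a g -> centraliser a (ginv g).
Proof.
rewrite /centraliser => h.
rewrite -[gmul (ginv g) a]gmulg1 -(gmulgV g) !gmulA -[gmul (gmul (ginv g) a) g]gmulA -h.
by rewrite gmulA gmulVg gmul1g.
Qed.

End Grp.

Section Rep.
Variables (G : group) (F : fieldType) (rho : G -> 'M[F]_3).
Hypothesis hrho : faithful_rep rho.

Lemma rho_unit g : rho g \in unitmx. Proof. by case: hrho. Qed.
Lemma rhoM g h : rho (gmul g h) = rho g *m rho h. Proof. by case: hrho => _ []. Qed.
Lemma rho_inj : injective rho. Proof. by case: hrho => _ []. Qed.

Lemma rho1 : rho (gone G) = 1%:M.
Proof.
have h : rho (gone G) = rho (gone G) *m rho (gone G) by rewrite -rhoM gmul1g.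
by rewrite -(mulmxV (rho_unit (gone G))) {2}h mulmxK // rho_unit.
Qed.

Lemma rhoV g : rho (ginv g) *m rho g = 1%:M.
Proof. by rewrite -rhoM gmulVg rho1. Qed.

Lemma cent_rho a g : centraliser a g <-> rho g *m rho a = rho a *m rho g.
Proof.
rewrite /centraliser; split => [h|h]; first by rewrite -!rhoM h.
by apply: rho_inj; rewrite !rhoM.
Qed.

End Rep.


Section Lev.
Variable F : fieldType.
Implicit Types M N : 'M[F]_3.

Lemma mul3E M N i j : (M *m N) i j = M i 0 * N 0 j + M i 1 * N 1 j + M i 2 * N 2 j.
Proof. by rewrite mxE sum3. Qed.

Lemma mx3P M N :
  M 0 0 = N 0 0 -> M 0 1 = N 0 1 -> M 0 2 = N 0 2 ->
  M 1 0 = N 1 0 -> M 1 1 = N 1 1 -> M 1 2 = N 1 2 ->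
  M 2 0 = N 2 0 -> M 2 1 = N 2 1 -> M 2 2 = N 2 2 -> M = N.
Proof.
move=> h00 h01 h02 h10 h11 h12 h20 h21 h22; apply/matrixP => i j.
have E : forall k : 'I_3, k = 0 \/ k = 1 \/ k = 2.
  by case=> [[|[|[|k]]] Hk] //; [left|right;left|right;right]; apply/val_inj.
by case: (E i) => [->|[->|->]]; case: (E j) => [->|[->|->]].
Qed.

Definition T3 M := [/\ M 0 1 = 0, M 0 2 = 0 & M 1 2 = 0].
Definition D1 M := [/\ M 0 0 = 1, M 1 1 = 1 & M 2 2 = 1].
Definition Slev (n : nat) M : Prop :=
  match n with
  | 0 => T3 M
  | 1 => T3 M /\ D1 M
  | 2 => (T3 M /\ D1 M) /\ (M 1 0 = 0 /\ M 2 1 = 0)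
  | _ => M = 1%:M
  end.

Lemma id3 (i j : 'I_3) : (1%:M : 'M[F]_3) i j = (i == j)%:R.
Proof. by rewrite mxE. Qed.

Lemma T3_mul M N : T3 M -> T3 N -> T3 (M *m N) /\
  [/\ (M *m N) 0 0 = M 0 0 * N 0 0, (M *m N) 1 1 = M 1 1 * N 1 1 &
      (M *m N) 2 2 = M 2 2 * N 2 2].
Proof.
case=> a1 a2 a3 [b1 b2 b3]; rewrite /T3 !mul3E a1 a2 a3 b1 b2 b3.
by rewrite !(mulr0, mul0r, addr0, add0r).
Qed.

Lemma S1_mul M N : Slev 1 M -> Slev 1 N -> Slev 1 (M *m N) /\
  (M *m N) 1 0 = M 1 0 + N 1 0 /\ (M *m N) 2 1 = M 2 1 + N 2 1.
Proof.
case=> TM [d1 d2 d3] [TN [e1 e2 e3]].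
have [T [f1 f2 f3]] := T3_mul TM TN.
case: TM => a1 a2 a3; case: TN => b1 b2 b3.
split; first by split => //; split; rewrite ?f1 ?f2 ?f3 ?d1 ?d2 ?d3 ?e1 ?e2 ?e3 mulr1.
rewrite !mul3E ?a1 ?a2 ?a3 ?b1 ?b2 ?b3 ?d1 ?d2 ?d3 ?e1 ?e2 ?e3.
by rewrite !(mulr0, mul0r, addr0, add0r, mulr1, mul1r).
Qed.

Lemma S2_mul M N : Slev 2 M -> Slev 2 N -> Slev 2 (M *m N) /\
  (M *m N) 2 0 = M 2 0 + N 2 0.
Proof.
case=> S1M [m10 m21] [S1N [n10 n21]].
have [S [h1 h2]] := S1_mul S1M S1N.
split; first by split => //; rewrite h1 h2 m10 m21 n10 n21 addr0.
case: S1M => [[a1 a2 a3] [d1 d2 d3]]; case: S1N => [[b1 b2 b3] [e1 e2 e3]].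
rewrite !mul3E ?m21 ?n10 ?d3 ?e1.
by rewrite !(mulr0, mul0r, addr0, add0r, mulr1, mul1r).
Qed.

Lemma S2_one M : Slev 2 M -> M 2 0 = 0 -> M = 1%:M.
Proof.
case=> [[[a1 a2 a3] [d1 d2 d3]] [m10 m21]] m20.
by apply: mx3P; rewrite id3 //.
Qed.

Lemma Slev_mul n M N : Slev n M -> Slev n N -> Slev n (M *m N).
Proof.
case: n => [|[|[|n]]] /=.
- by move=> a b; case: (T3_mul a b).
- by move=> a b; case: (S1_mul a b).
- by move=> a b; case: (S2_mul a b).
- by move=> -> ->; rewrite mul1mx.
Qed.

Lemma Slev_one n : Slev n 1%:M.
Proof.
have h01 : (1%:M : 'M[F]_3) 0 1 = 0 by rewrite id3.
have h02 : (1%:M : 'M[F]_3) 0 2 = 0 by rewrite id3.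
have h12 : (1%:M : 'M[F]_3) 1 2 = 0 by rewrite id3.
have h10 : (1%:M : 'M[F]_3) 1 0 = 0 by rewrite id3.
have h21 : (1%:M : 'M[F]_3) 2 1 = 0 by rewrite id3.
have d0 : (1%:M : 'M[F]_3) 0 0 = 1 by rewrite id3.
have d1 : (1%:M : 'M[F]_3) 1 1 = 1 by rewrite id3.
have d2 : (1%:M : 'M[F]_3) 2 2 = 1 by rewrite id3.
by case: n => [|[|[|n]]] //=.
Qed.

Lemma Slev_comm n a' b' a b : Slev n a' -> Slev n b' -> Slev n a -> Slev n b ->
  a' *m a = 1%:M -> b' *m b = 1%:M -> Slev n.+1 ((a' *m b') *m (a *m b)).
Proof.
case: n => [|[|[|n]]] /=.
- move=> ha' hb' ha hb ea eb.
  have [T1 [x1 x2 x3]] := T3_mul ha' hb'.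
  have [T2 [y1 y2 y3]] := T3_mul ha hb.
  have [T [z1 z2 z3]] := T3_mul T1 T2.
  have [_ [u1 u2 u3]] := T3_mul ha' ha.
  have [_ [v1 v2 v3]] := T3_mul hb' hb.
  move: u1 u2 u3 v1 v2 v3; rewrite ea eb !id3 /= => u1 u2 u3 v1 v2 v3.
  split => //; split; rewrite ?z1 ?z2 ?z3 ?x1 ?x2 ?x3 ?y1 ?y2 ?y3.
  + by rewrite mulrACA -u1 -v1 mulr1.
  + by rewrite mulrACA -u2 -v2 mulr1.
  + by rewrite mulrACA -u3 -v3 mulr1.
- move=> ha' hb' ha hb ea eb.
  have [T1 [x1 x2]] := S1_mul ha' hb'.
  have [T2 [y1 y2]] := S1_mul ha hb.
  have [T [z1 z2]] := S1_mul T1 T2.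
  have [_ [u1 u2]] := S1_mul ha' ha.
  have [_ [v1 v2]] := S1_mul hb' hb.
  move: u1 u2 v1 v2; rewrite ea eb !id3 /= => u1 u2 v1 v2.
  split => //; rewrite z1 z2 x1 x2 y1 y2; split.
  + by rewrite addrACA -u1 -v1 addr0.
  + by rewrite addrACA -u2 -v2 addr0.
- move=> ha' hb' ha hb ea eb.
  have [T1 x1] := S2_mul ha' hb'.
  have [T2 y1] := S2_mul ha hb.
  have [T z1] := S2_mul T1 T2.
  have [_ u1] := S2_mul ha' ha.
  have [_ v1] := S2_mul hb' hb.
  move: u1 v1; rewrite ea eb !id3 /= => u1 v1.
  apply: S2_one T _; rewrite z1 x1 y1.
  by rewrite addrACA -u1 -v1 addr0.
- by move=> -> -> -> ->; rewrite !mul1mx.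
Qed.

End Lev.


Lemma tri_soluble (G : group) (F : fieldType) (rho : G -> 'M[F]_3)
  (hrho : faithful_rep rho) (a : G) (Q : 'M[F]_3) : Q \in unitmx ->
  (forall g, centraliser a g -> T3 (Q *m rho g *m invmx Q)) -> soluble (centraliser a).
Proof.
move=> U H.
pose psi g := Q *m rho g *m invmx Q.
have psiM : forall g h, psi (gmul g h) = psi g *m psi h.
  move=> g h; rewrite /psi (rhoM hrho) !mulmxA; congr (_ *m _); congr (_ *m _).
  by rewrite mulmxKV.
have psi1 : psi (gone G) = 1%:M by rewrite /psi (rho1 hrho) mulmx1 mulmxV.
have psiV : forall g, psi (ginv g) *m psi g = 1%:M by move=> g; rewrite -psiM gmulVg psi1.
have psi_inj : injective psi.
  move=> g h /(congr1 (mulmx^~ Q)); rewrite /psi !mulmxKV //.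
  move=> /(congr1 (mulmx (invmx Q))); rewrite !mulmxA !mulVmx // !mul1mx.
  exact: (rho_inj hrho).
have claim : forall n z, derived_series n (centraliser a) z ->
    Slev n (psi z) /\ Slev n (psi (ginv z)).
  elim=> [|n IH] z /=.
    by move=> hz; split; apply: H => //; exact: cent_inv.
  move=> hz; apply: (hz (fun g => Slev n.+1 (psi g) /\ Slev n.+1 (psi (ginv g)))).
    split; [|split].
    - by rewrite ginv1 psi1; split; exact: Slev_one.
    - move=> x y [hx hx'] [hy hy']; rewrite psiM ginv_mul psiM.
      by split; exact: Slev_mul.
    - by move=> x [hx hx']; rewrite ginvK.
  move=> s [x [y [hx [hy ->]]]].
  have [ax ax'] := IH x hx; have [ay ay'] := IH y hy.
  rewrite ginv_comm /gcomm !psiM.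
  by split; apply: Slev_comm => //; apply: psiV.
exists 3%N => z /claim [h _]; apply: psi_inj; rewrite h psi1 //.
Qed.


Section Comb.
Variable F : fieldType.
Implicit Types X Y W : 'M[F]_3.

Lemma eigNX X l (v : 'rV[F]_3) e : v *m X = e *: v -> v *m (X - l%:M) = (e - l) *: v.
Proof. by move=> h; rewrite mulmxBr h mul_mx_scalar scalerBl. Qed.

Lemma line_mult2 (S : 'M[F]_3) (v c : 'rV_3) : \rank S = 1%N -> (v <= S)%MS ->
  (c <= S)%MS -> c != 0 -> exists r, v = r *: c.
Proof.
move=> rS vS cS cnz.
have [r0 ->] := line_mult rS vS; have [b hb] := line_mult rS cS.
have bnz : b != 0 by apply: contraNneq cnz => b0; rewrite hb b0 scale0r.
by exists (r0 / b); rewrite hb scalerA divfK.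
Qed.

Lemma in_im (N : 'M[F]_3) (v : 'rV_3) e : v *m N = e *: v -> e != 0 -> (v <= N)%MS.
Proof.
move=> h enz; apply/submxP; exists (e^-1 *: v).
by rewrite -scalemxAl h scalerA mulVf // scale1r.
Qed.

Lemma eig_nz X (v : 'rV_3) e : X \in unitmx -> v != 0 -> v *m X = e *: v -> e != 0.
Proof.
move=> U vnz h; apply/eqP => e0; move/eqP: vnz; apply.
by rewrite -(mulmxK U v) h e0 scale0r mul0mx.
Qed.

Lemma polyX_comm X l m : (X - l%:M) *m (X - m%:M) = (X - m%:M) *m (X - l%:M).
Proof. by apply: commN; rewrite mulmxBl mulmxBr scalar_mxC. Qed.

Lemma same_pattern X Y l m x y (c : 'rV_3) : X *m Y = Y *m X -> good X l m ->
  good Y x y -> c != 0 -> c *m X = m *: c -> c *m Y = y *: c ->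
  exists k d, k != 0 /\ Y = k *: X + d%:M.
Proof.
move=> XY [lm rX PX] [xy rY PY] cnz cX cY.
set NX := X - l%:M in rX PX *; set NY := Y - x%:M in rY PY *.
set k := (y - x) / (m - l).
have ml : m - l != 0 by rewrite subr_eq0 eq_sym.
have yx : y - x != 0 by rewrite subr_eq0 eq_sym.
have knz : k != 0 by rewrite mulf_neq0 // invr_eq0.
exists k, (x - k * l); split => //.
set W := NY - k *: NX.
suff W0 : W = 0.
  apply/eqP; rewrite -subr_eq0; apply/eqP; rewrite -W0 /W /NY /NX.
  rewrite raddfB /= scalerBr scale_scalar_mx.
  by rewrite opprD [in RHS]opprB !opprB !addrA addrAC [RHS]addrAC; congr (_ + _); rewrite addrAC.
have h1 : NX *m Y = Y *m NX := commN l XY.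
have comm : NY *m NX = NX *m NY := commN x (esym h1).
have cNX : c *m NX = (m - l) *: c := eigNX l cX.
have cNY : c *m NY = (y - x) *: c := eigNX x cY.
have cS : (c <= NY)%MS := in_im cNY yx.
have cSX : (c <= NX)%MS := in_im cNX ml.
have Wv : forall v : 'rV_3, v *m NX = 0 -> v *m W = 0.
  move=> v hv; rewrite /W mulmxBr -scalemxAr hv scaler0 subr0.
  have [r hr] := line_mult2 rY (submxMl v NY) cS cnz.
  have : (v *m NY) *m NX = 0 by rewrite -mulmxA comm mulmxA hv mul0mx.
  rewrite hr -scalemxAl cNX scalerA => /eqP; rewrite scaler_eq0 (negbTE cnz) orbF.
  by rewrite mulf_eq0 (negbTE ml) orbF => /eqP ->; rewrite scale0r.
have Wc : c *m W = 0.
  by rewrite /W mulmxBr -scalemxAr cNY cNX scalerA /k divfK // subrr.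
have MN : (X - m%:M) *m NX = 0 by rewrite /NX polyX_comm.
have Wu : forall u : 'rV_3, u *m W = 0.
  move=> u.
  have e1 : (u *m (X - m%:M)) *m W = 0 by apply: Wv; rewrite -mulmxA MN mulmx0.
  have e2 : (u *m NX) *m W = 0.
    have [r ->] := line_mult2 rX (submxMl u NX) cSX cnz.
    by rewrite -scalemxAl Wc scaler0.
  have e3 : u *m (X - m%:M) - u *m NX = (l - m) *: u.
    by rewrite -mulmxBr /NX opprB addrC -addrA addKr -raddfB /= mul_mx_scalar.
  have : (l - m) *: (u *m W) = 0 by rewrite scalemxAl -e3 mulmxBl e1 e2 subrr.
  move/eqP; rewrite scaler_eq0 subr_eq0 (negbTE lm) /= => /eqP //.
apply/row_matrixP => i; rewrite row0 -[W]mul1mx row_mul; exact: Wu.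
Qed.

Lemma from_ker X l (v : 'rV[F]_3) : v *m (X - l%:M) = 0 -> v *m X = l *: v.
Proof. by rewrite mulmxBr mul_mx_scalar => /eqP; rewrite subr_eq0 => /eqP. Qed.

Lemma good_vec X l m : good X l m ->
  nz_row (X - l%:M) != 0 /\ nz_row (X - l%:M) *m X = m *: nz_row (X - l%:M).
Proof.
case=> lm rX PX; split; first by rewrite nz_row_eq0 -mxrank_eq0 rX.
apply: from_ker; have [D ->] := submxP (nz_row_sub (X - l%:M)).
by rewrite -mulmxA PX mulmx0.
Qed.

Lemma good_stab X Y x y : good Y x y -> X *m Y = Y *m X ->
  exists t, nz_row (Y - x%:M) *m X = t *: nz_row (Y - x%:M).
Proof.
case=> xy rY PY XY; apply: line_mult rY _.
have [D ->] := submxP (nz_row_sub (Y - x%:M)).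
by rewrite -mulmxA (commN x (esym XY)) mulmxA submxMl.
Qed.

Lemma good_eig X l m (v : 'rV_3) t : good X l m -> v != 0 -> v *m X = t *: v ->
  t = l \/ t = m.
Proof.
case=> lm rX PX vnz vX.
have : v *m ((X - l%:M) *m (X - m%:M)) = 0 by rewrite PX mulmx0.
rewrite mulmxA (eigNX l vX) -scalemxAl (eigNX m vX) scalerA => /eqP.
rewrite scaler_eq0 (negbTE vnz) orbF mulf_eq0 !subr_eq0.
by case/orP => /eqP; auto.
Qed.

Lemma ord3 (k : 'I_3) : k = 0 \/ k = 1 \/ k = 2.
Proof. by case: k => [[|[|[|k]]] Hk] //; [left|right;left|right;right]; apply/val_inj. Qed.

Lemma combine X Y l m x y : X \in unitmx -> Y \in unitmx -> X *m Y = Y *m X ->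
  good X l m -> good Y x y ->
  (exists k d, k != 0 /\ Y = k *: X + d%:M) \/
  exists P, [/\ P \in unitmx, l != 0, m != 0, x != 0 & y != 0] /\
    P *m X *m invmx P = diag_mx (\row_(i < 3) [:: l; l; m]`_i) /\
    P *m Y *m invmx P = diag_mx (\row_(i < 3) [:: x; y; x]`_i).
Proof.
move=> UX UY XY gX gY.
have [anz aX] := good_vec gX; have [bnz bY] := good_vec gY.
set a := nz_row (X - l%:M) in anz aX; set b := nz_row (Y - x%:M) in bnz bY.
have [t bX] := good_stab gY XY; have [s aY] := good_stab gX (esym XY).
rewrite -/a -/b in bX aY.
case: (good_eig gX bnz bX) => [tl | tm]; last first.
  by left; apply: (same_pattern XY gX gY bnz); rewrite -?tm.
case: (good_eig gY anz aY) => [sx | sy]; last first.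
  by left; apply: (same_pattern XY gX gY anz); rewrite -?sy.
right.
have [lm rX PX] := gX; have [xy rY PY] := gY.
set K1 := kermx (X - l%:M); set K2 := kermx (Y - x%:M).
have r1 : \rank K1 = 2%N by rewrite mxrank_ker rX.
have r2 : \rank K2 = 2%N by rewrite mxrank_ker rY.
have rc : \rank (K1 :&: K2)%MS != 0%N.
  move: (mxrank_sum_cap K1 K2) (rank_leq_col (K1 + K2)%MS); rewrite r1 r2.
  by move: (\rank (K1 + K2)%MS) (\rank (K1 :&: K2)%MS) => p q e le; apply/eqP => q0; move: e le; rewrite q0 addn0 => ->.
set c0 := nz_row (K1 :&: K2)%MS.
have c0nz : c0 != 0 by rewrite nz_row_eq0 -mxrank_eq0; exact: rc.
have c0NX : c0 *m (X - l%:M) = 0.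
  by apply/sub_kermxP; apply: submx_trans (nz_row_sub _) (capmxSl _ _).
have c0NY : c0 *m (Y - x%:M) = 0.
  by apply/sub_kermxP; apply: submx_trans (nz_row_sub _) (capmxSr _ _).
have c0X := from_ker c0NX; have c0Y := from_ker c0NY.
have ml : m - l != 0 by rewrite subr_eq0 eq_sym.
have yx : y - x != 0 by rewrite subr_eq0 eq_sym.
have U : mk3 c0 b a \in unitmx.
  apply: mk3_unit => p q r h.
  have r0 : r = 0.
    have := congr1 (mulmx^~ (X - l%:M)) h.
    rewrite !mulmxDl -!scalemxAl c0NX (eigNX l bX) (eigNX l aX) tl subrr scale0r.
    rewrite !scaler0 !add0r mul0mx scalerA => /eqP; rewrite scaler_eq0 (negbTE anz) orbF.
    by rewrite mulf_eq0 (negbTE ml) orbF => /eqP.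
  move: h; rewrite r0 scale0r addr0 => h.
  have q0 : q = 0.
    have := congr1 (mulmx^~ (Y - x%:M)) h.
    rewrite !mulmxDl -!scalemxAl c0NY (eigNX x bY).
    rewrite !scaler0 !add0r mul0mx scalerA => /eqP; rewrite scaler_eq0 (negbTE bnz) orbF.
    by rewrite mulf_eq0 (negbTE yx) orbF => /eqP.
  by move: h; rewrite q0 scale0r addr0 => /scale_nz /(_ c0nz).
exists (mk3 c0 b a); split.
  split => //.
  - exact: eig_nz UX c0nz c0X.
  - exact: eig_nz UX anz aX.
  - exact: eig_nz UY c0nz c0Y.
  - exact: eig_nz UY bnz bY.
split; apply: conj_diag => // i; case: (ord3 i) => [->|[->|->]];
  rewrite ?mk3_0 ?mk3_1 ?mk3_2 mxE /=; by rewrite ?c0X ?c0Y ?aX ?bY ?bX ?aY ?tl ?sx.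
Qed.

End Comb.

Unset Implicit Arguments.

Lemma flag_sol (G : group) (F : fieldType) (rho : G -> 'M[F]_3)
  (hrho : faithful_rep rho) (a : G) : flagP (rho a) -> soluble (centraliser a).
Proof.
case=> v0 [v1 [v2 [U H]]].
apply: (tri_soluble hrho U) => g hg.
have hc := (cent_rho hrho a g).1 hg.
have [c [p [q [h0 h1]]]] := H (rho g) (esym hc).
have := conj_tri (Y := rho g) U (c := c) (a := p) (b := q).
by rewrite mk3_0 mk3_1; apply.
Qed.

Theorem corollary2p2 (G : group) (A B : G)
  (F : closedFieldType) (rho : G -> 'M[F]_3)
  (hAB : gmul A B = gmul B A)
  (hA_ne : ~ (forall g : G, centraliser A g))
  (hB_ne : ~ (forall g : G, centraliser B g))
  (hA_ns : ~ soluble (centraliser A))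
  (hB_ns : ~ soluble (centraliser B))
  (hAB_ne : ~ (forall g : G, centraliser A g <-> centraliser B g))
  (hrho : faithful_rep rho) :
  exists (P : 'M[F]_3) (lam mu x y : F),
    P \in unitmx /\ lam != 0 /\ mu != 0 /\ x != 0 /\ y != 0 /\
    lam != mu /\ x != y /\
    P *m rho A *m invmx P = diag_mx (\row_(i < 3) [:: lam; lam; mu]`_i) /\
    P *m rho B *m invmx P = diag_mx (\row_(i < 3) [:: x; y; x]`_i).
Proof.
have notscal : forall a : G, ~ soluble (centraliser a) ->
    ~ (forall g, centraliser a g) -> exists l m, good (rho a) l m.
  move=> a ns ne.
  have ns' : forall c, rho a != c%:M.
    move=> c; apply/eqP => h; apply: ne => g; apply/(cent_rho hrho).
    by rewrite h scalar_mxC.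
  by case: (classify ns') => // /(@flag_sol _ _ _ hrho).
have [l [m gA]] := notscal A hA_ns hA_ne.
have [x [y gB]] := notscal B hB_ns hB_ne.
have XY : rho A *m rho B = rho B *m rho A by rewrite -!(rhoM hrho) hAB.
case: (combine (rho_unit hrho A) (rho_unit hrho B) XY gA gB) =>
  [[k [d [knz hY]]] | [P [[U l0 m0 x0 y0] [hA hB]]]].
  exfalso; apply: hAB_ne => g.
  split => h; apply/(cent_rho hrho); have := (cent_rho hrho _ _).1 h; rewrite hY;
    rewrite ?mulmxDr ?mulmxDl -?scalemxAr -?scalemxAl scalar_mxC.
    by move=> ->.
  by move/addIr/(scalerI knz).
have [lm _ _] := gA; have [xy _ _] := gB.
by exists P, l, m, x, y.
Qed.
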